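(* Let $T:\mathbb{Z}_{\ge 0}\to\mathbb{R}$ satisfy $T(mn) = T(m)T(n) + T(m-1)T(n-1)$ for all integers $m,n\ge 1$, and suppose $T(0)=0$ and $T(1)=1$. Write $c=T(2)$ and $d=T(3)$. Then $c^2+2c-1\neq 0$ and $$d=\frac{3c^3+c}{c^2+2c-1}.$$ Consequently, $T(n)$ for each $n\ge 2$ is uniquely determined by the value of $c$ alone: if $T'$ is another sequence satisfying the same product rule with $T'(0)=0$, $T'(1)=1$ and $T'(2)=c$, then $T'(n)=T(n)$ for all $n\ge 0$. *)

(* Defs.v *)
From Stdlib Require Import Reals.
Open Scope R_scope.

(* The product rule T(mn) = T(m)T(n) + T(m-1)T(n-1) for all m, n >= 1.
   For m, n >= 1 the nat subtraction m - 1 is exact. *)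
Definition product_rule (T : nat -> R) : Prop :=
  forall m n : nat, (1 <= m)%nat -> (1 <= n)%nat ->
    T (m * n)%nat = T m * T n + T (m - 1)%nat * T (n - 1)%nat.

(* Main.v *)
Require Import Defs.
From Stdlib Require Import Reals Lra Lia Psatz Arith.
Open Scope R_scope.

Lemma key (S : nat -> R) : product_rule S -> S 0%nat = 0 -> S 1%nat = 1 ->
  S 3%nat * (S 2%nat ^ 2 + 2 * S 2%nat - 1) = 3 * S 2%nat ^ 3 + S 2%nat.
Proof.
  intros H H0 H1.
  pose proof (H 2 2 ltac:(lia) ltac:(lia))%nat as e4.
  pose proof (H 2 3 ltac:(lia) ltac:(lia))%nat as e6.
  pose proof (H 2 4 ltac:(lia) ltac:(lia))%nat as e8.
  pose proof (H 3 3 ltac:(lia) ltac:(lia))%nat as e9.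
  pose proof (H 3 4 ltac:(lia) ltac:(lia))%nat as e12a.
  pose proof (H 2 6 ltac:(lia) ltac:(lia))%nat as e12b.
  pose proof (H 2 9 ltac:(lia) ltac:(lia))%nat as e18a.
  pose proof (H 3 6 ltac:(lia) ltac:(lia))%nat as e18b.
  simpl in *.
  rewrite H1 in *.
  rewrite e4 in e8, e12a.
  rewrite e6 in e12b, e18b.
  rewrite e8, e9 in e18a.
  assert (e5 : S 5%nat = S 3%nat + S 2%nat * S 3%nat - S 2%nat ^ 2) by nra.
  rewrite e5 in e18b.
  nra.
Qed.

Lemma recur (S : nat -> R) (n : nat) : product_rule S -> S 1%nat = 1 -> (1 <= n)%nat ->
  S (2 * n)%nat = S 2%nat * S n + S (n - 1)%nat /\
  S (2 * n - 1)%nat = S n + (S 3%nat - S 2%nat) * S (n - 1)%nat.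
Proof.
  intros H H1 Hn.
  pose proof (H 2 n ltac:(lia) Hn)%nat as a.
  pose proof (H 4 n ltac:(lia) Hn)%nat as b.
  pose proof (H 2 (2*n) ltac:(lia) ltac:(lia))%nat as e.
  pose proof (H 2 2 ltac:(lia) ltac:(lia))%nat as e4.
  simpl (2*2)%nat in e4. simpl (2-1)%nat in *. simpl (4-1)%nat in b.
  replace (2 * (2 * n))%nat with (4 * n)%nat in e by lia.
  rewrite H1 in *.
  split; nra.
Qed.

Theorem lemma10 (T : nat -> R) :
  product_rule T -> T 0%nat = 0 -> T 1%nat = 1 ->
  let c := T 2%nat in
  let d := T 3%nat in
  c ^ 2 + 2 * c - 1 <> 0 /\
  d = (3 * c ^ 3 + c) / (c ^ 2 + 2 * c - 1) /\
  (forall T' : nat -> R,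
     product_rule T' -> T' 0%nat = 0 -> T' 1%nat = 1 -> T' 2%nat = c ->
     forall n : nat, T' n = T n).
Proof.
  intros H H0 H1 c d.
  pose proof (key T H H0 H1) as K. fold c d in K.
  assert (Hne : c ^ 2 + 2 * c - 1 <> 0).
  { intro Z. rewrite Z in K.
    assert (c * (3 * c ^ 2 + 1) = 0) by nra.
    destruct (Rmult_integral _ _ H2) as [Hc|Hc]; nra. }
  split; [exact Hne|]. split.
  { rewrite <- K. field. exact Hne. }
  intros T' H' H0' H1' H2'.
  pose proof (key T' H' H0' H1') as K'. rewrite H2' in K'.
  assert (H3' : T' 3%nat = d).
  { apply (Rmult_eq_reg_r (c ^ 2 + 2 * c - 1)); [rewrite K, K'; reflexivity | exact Hne]. }
  intro n. induction n as [n IH] using (well_founded_induction lt_wf).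
  destruct n as [|[|[|n]]]; [rewrite H0', H0; reflexivity|rewrite H1', H1; reflexivity|rewrite H2'; reflexivity|].
  destruct (Nat.Even_or_Odd (S (S (S n)))) as [[m Hm]|[m Hm]].
  - assert (Hm1 : (1 <= m)%nat) by lia.
    destruct (recur T m H H1 Hm1) as [A _].
    destruct (recur T' m H' H1' Hm1) as [A' _].
    rewrite Hm, A, A', H2', IH, (IH (m-1)%nat); [reflexivity|lia|lia].
  - assert (Hm1 : (1 <= m + 1)%nat) by lia.
    destruct (recur T (m+1) H H1 Hm1) as [_ A].
    destruct (recur T' (m+1) H' H1' Hm1) as [_ A'].
    replace (2 * (m + 1) - 1)%nat with (S (S (S n))) in A, A' by lia.
    rewrite A, A', H2', H3', IH, (IH (m+1-1)%nat); [reflexivity|lia|lia].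
Qed.
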